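(* For any diagonal section $\delta$, the function $U_\delta\colon[0,1]^2\to[0,1]$ defined by $$U_\delta(x,y)=\min\left\{x,\;y,\;y-\frac12\left(\widehat{\delta}(x)+\widehat{\delta}(y)+\mathrm{TV}_x^y(\widehat{\delta})\right)\right\}$$ is a copula with diagonal section $\delta$, i.e. $U_\delta$ is a copula and $U_\delta(t,t)=\delta(t)$ for all $t\in[0,1]$.
   Context: $\mathbb{I}=[0,1]$. A (bivariate) copula is a function $C\colon\mathbb{I}^2\to\mathbb{I}$ with $C(x,0)=C(0,y)=0$, $C(x,1)=x$, $C(1,y)=y$ for all $x,y$, and $C(b,d)+C(a,c)-C(b,c)-C(a,d)\ge 0$ for all $a\le b$, $c\le d$ in $\mathbb{I}$. A diagonal section is a function $\delta\colon\mathbb{I}\to\mathbb{I}$ with $\delta(x)\le x$ for all $x$, $0\le\delta(y)-\delta(x)\le 2(y-x)$ whenever $x\le y$, and $\delta(1)=1$. Write $\widehat{\delta}(x)=x-\delta(x)$. For $f\colon\mathbb{I}\to\mathbb{R}$ and $0\le x\le y\le1$, $\mathrm{TV}_x^y(f)=\sup\{\sum_{i=1}^n|f(x_i)-f(x_{i-1})|: x=x_0<x_1<\dots<x_n=y\}$ is the total variation of $f$ on $[x,y]$; for $y<x$ one sets $\mathrm{TV}_x^y(f)=-\mathrm{TV}_y^x(f)$. *)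

(* Defs.v *)
From Stdlib Require Import Reals Lra List.
From Coquelicot Require Import Coquelicot.
Open Scope R_scope.

(* Copula on I^2 (functions defined on all of R^2, only values on I^2 matter). *)
Definition in_I (x : R) : Prop := 0 <= x <= 1.

Definition is_copula (C : R -> R -> R) : Prop :=
  (forall x y, in_I x -> in_I y -> in_I (C x y)) /\
  (forall x, in_I x -> C x 0 = 0 /\ C 0 x = 0 /\ C x 1 = x /\ C 1 x = x) /\
  (forall a b c d, in_I a -> in_I b -> in_I c -> in_I d -> a <= b -> c <= d ->
      C b d + C a c - C b c - C a d >= 0).

Definition is_diagonal_section (delta : R -> R) : Prop :=
  (forall x, in_I x -> in_I (delta x)) /\
  (forall x, in_I x -> delta x <= x) /\
  (forall x y, in_I x -> in_I y -> x <= y ->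
      0 <= delta y - delta x <= 2 * (y - x)) /\
  delta 1 = 1.

Definition delta_hat (delta : R -> R) (x : R) : R := x - delta x.

Fixpoint strictly_increasing (l : list R) : Prop :=
  match l with
  | a :: ((b :: _) as t) => a < b /\ strictly_increasing t
  | _ => True
  end.

Definition is_partition (x y : R) (l : list R) : Prop :=
  hd 0 l = x /\ last l 0 = y /\ l <> nil /\ strictly_increasing l.

Fixpoint var_sum (f : R -> R) (l : list R) : R :=
  match l with
  | a :: ((b :: _) as t) => Rabs (f b - f a) + var_sum f t
  | _ => 0
  end.

Definition TV_Rbar (f : R -> R) (x y : R) : Rbar :=
  Lub_Rbar (fun s => exists l, is_partition x y l /\ s = var_sum f l).

(* signed total variation TV_x^y, as a real number; for y < x it is -TV_y^x.
   (For the Lipschitz function delta_hat it is always finite.) *)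
Definition TV (f : R -> R) (x y : R) : R :=
  if Rle_dec x y then real (TV_Rbar f x y) else - real (TV_Rbar f y x).

Definition U_delta (delta : R -> R) (x y : R) : R :=
  Rmin x (Rmin y
    (y - / 2 * (delta_hat delta x + delta_hat delta y
                 + TV (delta_hat delta) x y))).

(* Main.v *)
Require Import Defs.
From Stdlib Require Import Reals Lra List.
From Coquelicot Require Import Coquelicot.
Open Scope R_scope.

Lemma tri (x y z : R) : Rabs (x - z) <= Rabs (x - y) + Rabs (y - z).
Proof.
  replace (x - z) with ((x - y) + (y - z)) by ring. apply Rabs_triang.
Qed.

Lemma lub_fin (E : R -> Prop) s0 M : E s0 -> (forall s, E s -> s <= M) ->
  (forall s, E s -> s <= real (Lub_Rbar E)) /\
  (forall M', (forall s, E s -> s <= M') -> real (Lub_Rbar E) <= M').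
Proof.
  intros H0 HM.
  destruct (Lub_Rbar_correct E) as [ub lub].
  destruct (Lub_Rbar E) as [l| |] eqn:El.
  - split.
    + intros s Hs. exact (ub s Hs).
    + intros M' HM'. apply (lub (Finite M')). intros s Hs. simpl. exact (HM' s Hs).
  - exfalso. assert (Hl := lub (Finite M)). simpl in Hl. apply Hl.
    intros s Hs. simpl. exact (HM s Hs).
  - exfalso. exact (ub s0 H0).
Qed.

Lemma last2 (a b : R) r : last (a :: b :: r) 0 = last (b :: r) 0.
Proof. reflexivity. Qed.

Lemma vs2 f (a b : R) r : var_sum f (a :: b :: r) = Rabs (f b - f a) + var_sum f (b :: r).
Proof. reflexivity. Qed.

Lemma si2 (a b : R) r : strictly_increasing (a :: b :: r) <-> a < b /\ strictly_increasing (b :: r).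
Proof. simpl. tauto. Qed.

Lemma si_bounds : forall l a, strictly_increasing (a :: l) ->
  forall z, In z (a :: l) -> a <= z <= last (a :: l) 0.
Proof.
  induction l as [|b r IH]; intros a Hs z Hz.
  - destruct Hz as [<-|[]]. simpl. lra.
  - rewrite last2. apply si2 in Hs. destruct Hs as [Hab Hs].
    assert (Hb := IH b Hs b (or_introl eq_refl)).
    destruct Hz as [<-|Hz].
    + lra.
    + assert (H := IH b Hs z Hz). lra.
Qed.

Definition Lip (f : R -> R) := forall x y, in_I x -> in_I y -> x <= y -> Rabs (f y - f x) <= y - x.

Lemma vs_upper f : Lip f -> forall l a, strictly_increasing (a :: l) ->
  (forall z, In z (a :: l) -> in_I z) -> var_sum f (a :: l) <= last (a :: l) 0 - a.
Proof.
  intros Lf. induction l as [|b r IH]; intros a Hs HI.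
  - simpl. lra.
  - rewrite vs2, last2. apply si2 in Hs. destruct Hs as [Hab Hs].
    assert (H1 := IH b Hs (fun z Hz => HI z (or_intror Hz))).
    assert (H2 := Lf a b (HI a (or_introl eq_refl)) (HI b (or_intror (or_introl eq_refl))) (Rlt_le _ _ Hab)).
    lra.
Qed.

Lemma vs_lower f : forall l a, Rabs (f (last (a :: l) 0) - f a) <= var_sum f (a :: l).
Proof.
  induction l as [|b r IH]; intros a.
  - simpl. unfold Rminus. rewrite Rplus_opp_r, Rabs_R0. lra.
  - rewrite vs2, last2. assert (H := IH b).
    assert (H2 := tri (f (last (b :: r) 0)) (f b) (f a)). lra.
Qed.

Definition Tv f a b := real (TV_Rbar f a b).

Lemma part_exists a b : a <= b -> exists l, is_partition a b l.
Proof.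
  intros Hab. destruct (Req_dec a b) as [<-|Hne].
  - exists (a :: nil). unfold is_partition. simpl. repeat split; try easy.
  - exists (a :: b :: nil). unfold is_partition. simpl. repeat split; try easy. lra.
Qed.

Lemma part_inv a b l : is_partition a b l -> exists l', l = a :: l' /\
  strictly_increasing (a :: l') /\ last (a :: l') 0 = b.
Proof.
  intros [H1 [H2 [H3 H4]]]. destruct l as [|x l']; [easy|].
  simpl in H1. subst x. exists l'. tauto.
Qed.

Lemma T_props f (Lf : Lip f) a b : in_I a -> in_I b -> a <= b ->
  (forall l, is_partition a b l -> var_sum f l <= Tv f a b) /\
  (forall M, (forall l, is_partition a b l -> var_sum f l <= M) -> Tv f a b <= M).
Proof.
  intros Ia Ib Hab.
  destruct (part_exists a b Hab) as [l0 Hl0].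
  assert (Hfin := lub_fin (fun s => exists l, is_partition a b l /\ s = var_sum f l)
    (var_sum f l0) (b - a)).
  destruct Hfin as [P1 P2].
  - exists l0. easy.
  - intros s [l [Hl ->]]. destruct (part_inv a b l Hl) as [l' [-> [Hs Hlast]]].
    rewrite <- Hlast. apply vs_upper; auto.
    intros z Hz. assert (Hb := si_bounds l' a Hs z Hz). rewrite Hlast in Hb.
    unfold in_I in *. lra.
  - unfold Tv, TV_Rbar. split.
    + intros l Hl. apply P1. exists l. easy.
    + intros M HM. apply P2. intros s [l [Hl ->]]. apply HM. exact Hl.
Qed.

Lemma T_ub f (Lf : Lip f) a b : in_I a -> in_I b -> a <= b -> Tv f a b <= b - a.
Proof.
  intros Ia Ib Hab. destruct (T_props f Lf a b Ia Ib Hab) as [_ P2]. apply P2.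
  intros l Hl. destruct (part_inv a b l Hl) as [l' [-> [Hs Hlast]]].
  rewrite <- Hlast. apply vs_upper; auto.
  intros z Hz. assert (Hb := si_bounds l' a Hs z Hz). rewrite Hlast in Hb.
  unfold in_I in *. lra.
Qed.

Lemma T_lb f (Lf : Lip f) a b : in_I a -> in_I b -> a <= b -> Rabs (f b - f a) <= Tv f a b.
Proof.
  intros Ia Ib Hab. destruct (T_props f Lf a b Ia Ib Hab) as [P1 _].
  destruct (part_exists a b Hab) as [l Hl].
  assert (H := P1 l Hl).
  destruct (part_inv a b l Hl) as [l' [-> [Hs Hlast]]].
  assert (H2 := vs_lower f l' a). rewrite Hlast in H2. lra.
Qed.

Lemma T_prepend f (Lf : Lip f) a x b : in_I a -> in_I b -> a < x -> x <= b ->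
  Rabs (f x - f a) + Tv f x b <= Tv f a b.
Proof.
  intros Ia Ib Hax Hxb.
  assert (Ix : in_I x) by (unfold in_I in *; lra).
  destruct (T_props f Lf a b Ia Ib ltac:(lra)) as [P1 _].
  destruct (T_props f Lf x b Ix Ib Hxb) as [_ P2].
  assert (Tv f x b <= Tv f a b - Rabs (f x - f a)); [|lra].
  apply P2. intros l Hl. destruct (part_inv x b l Hl) as [l' [-> [Hs Hlast]]].
  assert (Hp : is_partition a b (a :: x :: l')).
  { unfold is_partition. split; [reflexivity|]. split; [rewrite last2; exact Hlast|].
    split; [easy|]. apply si2. split; assumption. }
  assert (H := P1 _ Hp). rewrite vs2 in H. lra.
Qed.

Lemma T_super f (Lf : Lip f) a b c : in_I a -> in_I b -> in_I c -> a <= b -> b <= c ->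
  Tv f a b + Tv f b c <= Tv f a c.
Proof.
  intros Ia Ib Ic Hab Hbc.
  destruct (T_props f Lf a b Ia Ib Hab) as [_ P2].
  assert (Tv f a b <= Tv f a c - Tv f b c); [|lra].
  apply P2. intros l Hl. destruct (part_inv a b l Hl) as [l' [-> [Hs Hlast]]].
  cut (var_sum f (a :: l') + Tv f b c <= Tv f a c); [lra|].
  clear P2 Hl. revert a Ia Hab Hs Hlast.
  induction l' as [|x r IH]; intros a Ia Hab Hs Hlast.
  - simpl in Hlast. subst a. simpl. lra.
  - rewrite vs2. apply si2 in Hs. destruct Hs as [Hax Hs]. rewrite last2 in Hlast.
    assert (Hxb := si_bounds r x Hs x (or_introl eq_refl)). rewrite Hlast in Hxb.
    assert (Ix : in_I x) by (unfold in_I in *; lra).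
    assert (H1 := IH x Ix ltac:(lra) Hs Hlast).
    assert (H2 := T_prepend f Lf a x c Ia Ic Hax ltac:(lra)). lra.
Qed.

Lemma T_nonneg f (Lf : Lip f) a b : in_I a -> in_I b -> a <= b -> 0 <= Tv f a b.
Proof.
  intros. assert (H2 := T_lb f Lf a b H H0 H1). assert (H3 := Rabs_pos (f b - f a)). lra.
Qed.

Lemma T_split f (Lf : Lip f) a b c : in_I a -> in_I b -> in_I c -> a <= b -> b <= c ->
  Tv f a c <= Tv f a b + Tv f b c.
Proof.
  intros Ia Ib Ic Hab Hbc.
  destruct (T_props f Lf a c Ia Ic ltac:(lra)) as [_ P2].
  apply P2. intros l Hl. destruct (part_inv a c l Hl) as [l' [-> [Hs Hlast]]].
  clear P2 Hl. revert a Ia Hab Hs Hlast.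
  induction l' as [|x r IH]; intros a Ia Hab Hs Hlast.
  - simpl in Hlast. subst a. simpl.
    assert (b = c) by lra. subst b.
    assert (H1 := T_nonneg f Lf c c Ic Ic (Rle_refl _)). lra.
  - rewrite vs2. apply si2 in Hs. destruct Hs as [Hax Hs]. rewrite last2 in Hlast.
    assert (Hxc := si_bounds r x Hs x (or_introl eq_refl)). rewrite Hlast in Hxc.
    assert (Ix : in_I x) by (unfold in_I in *; lra).
    destruct (Rle_dec x b) as [Hxb|Hxb].
    + assert (H1 := IH x Ix Hxb Hs Hlast).
      assert (H2 := T_prepend f Lf a x b Ia Ib Hax Hxb). lra.
    + destruct (T_props f Lf b c Ib Ic Hbc) as [Q1 _].
      assert (Hp : is_partition b c (b :: x :: r)).
      { unfold is_partition. split; [reflexivity|]. split; [rewrite last2; exact Hlast|].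
        split; [easy|]. apply si2. split; [lra|assumption]. }
      assert (H1 := Q1 _ Hp). rewrite vs2 in H1.
      assert (H2 := T_lb f Lf a b Ia Ib Hab).
      assert (H3 := tri (f x) (f b) (f a)). lra.
Qed.

Lemma T_add f (Lf : Lip f) a b c : in_I a -> in_I b -> in_I c -> a <= b -> b <= c ->
  Tv f a c = Tv f a b + Tv f b c.
Proof.
  intros. apply Rle_antisym; [apply T_split|apply T_super]; auto.
Qed.

Lemma I0 : in_I 0. Proof. unfold in_I; lra. Qed.
Lemma I1 : in_I 1. Proof. unfold in_I; lra. Qed.

Lemma TV_eq f (Lf : Lip f) x y : in_I x -> in_I y -> TV f x y = Tv f 0 y - Tv f 0 x.
Proof.
  intros Ix Iy. unfold TV. destruct (Rle_dec x y) as [H|H].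
  - rewrite (T_add f Lf 0 x y I0 Ix Iy); [unfold Tv; ring| |exact H]. unfold in_I in Ix; lra.
  - rewrite (T_add f Lf 0 y x I0 Iy Ix); [unfold Tv; ring| |lra]. unfold in_I in Iy; lra.
Qed.

Lemma key (a b c d ha hb hc hd Va Vb Vc Vd : R) : a <= b -> c <= d ->
  hb - ha <= Vb - Va -> ha - hb <= Vb - Va -> Vb - Va <= b - a ->
  hd - hc <= Vd - Vc -> hc - hd <= Vd - Vc -> Vd - Vc <= d - c ->
  Rmin b (Rmin d (d - / 2 * (hb + hd + (Vd - Vb)))) +
  Rmin a (Rmin c (c - / 2 * (ha + hc + (Vc - Va)))) -
  Rmin b (Rmin c (c - / 2 * (hb + hc + (Vc - Vb)))) -
  Rmin a (Rmin d (d - / 2 * (ha + hd + (Vd - Va)))) >= 0.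
Proof.
  intros. unfold Rmin. repeat destruct Rle_dec; lra.
Qed.

Theorem theorem3p3 (delta : R -> R) :
  is_diagonal_section delta ->
  is_copula (U_delta delta) /\
  (forall t, in_I t -> U_delta delta t t = delta t).
Proof.
  intros [D1 [D2 [D3 D4]]].
  set (h := delta_hat delta).
  assert (Lf : Lip h).
  { intros x y Ix Iy Hxy. unfold h, delta_hat. assert (H := D3 x y Ix Iy Hxy).
    apply Rabs_le. lra. }
  set (V := fun t => Tv h 0 t).
  assert (Ueq : forall x y, in_I x -> in_I y -> U_delta delta x y =
     Rmin x (Rmin y (y - / 2 * (h x + h y + (V y - V x))))).
  { intros x y Ix Iy. unfold U_delta. fold h. rewrite (TV_eq h Lf x y Ix Iy). reflexivity. }
  assert (Fa : forall p q, in_I p -> in_I q -> p <= q ->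
     h q - h p <= V q - V p /\ h p - h q <= V q - V p /\ V q - V p <= q - p).
  { intros p q Ip Iq Hpq. unfold V.
    assert (Hp0 : 0 <= p) by (unfold in_I in Ip; lra).
    rewrite (T_add h Lf 0 p q I0 Ip Iq Hp0 Hpq).
    assert (H1 := T_lb h Lf p q Ip Iq Hpq). assert (H2 := T_ub h Lf p q Ip Iq Hpq).
    apply Rabs_le_between in H1. lra. }
  assert (Hh : forall x, in_I x -> 0 <= h x <= x).
  { intros x Ix. unfold h, delta_hat. assert (H1 := D1 x Ix). assert (H2 := D2 x Ix).
    unfold in_I in *. lra. }
  assert (h0 : h 0 = 0). { assert (H := Hh 0 I0). lra. }
  assert (h1 : h 1 = 0). { unfold h, delta_hat. rewrite D4. ring. }
  assert (V0 : V 0 = 0).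
  { unfold V. assert (H1 := T_ub h Lf 0 0 I0 I0 (Rle_refl _)).
    assert (H2 := T_nonneg h Lf 0 0 I0 I0 (Rle_refl _)). lra. }
  split; [split; [|split]|].
  - intros x y Ix Iy. rewrite (Ueq x y Ix Iy).
    assert (Hx := Hh x Ix). assert (Hy := Hh y Iy).
    unfold in_I in *.
    destruct (Rle_dec x y) as [Hxy|Hxy].
    + destruct (Fa x y ltac:(unfold in_I; lra) ltac:(unfold in_I; lra) Hxy) as [F1 [F2 F3]].
      unfold Rmin. repeat destruct Rle_dec; lra.
    + destruct (Fa y x ltac:(unfold in_I; lra) ltac:(unfold in_I; lra) ltac:(lra)) as [F1 [F2 F3]].
      unfold Rmin. repeat destruct Rle_dec; lra.
  - intros x Ix. assert (Hx := Hh x Ix).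
    assert (Hx0 : 0 <= x) by (unfold in_I in Ix; lra).
    destruct (Fa 0 x I0 Ix Hx0) as [F1 [F2 F3]].
    destruct (Fa x 1 Ix I1 ltac:(unfold in_I in Ix; lra)) as [G1 [G2 G3]].
    rewrite (Ueq x 0 Ix I0), (Ueq 0 x I0 Ix), (Ueq x 1 Ix I1), (Ueq 1 x I1 Ix).
    rewrite h0, h1, V0 in *. unfold in_I in Ix.
    repeat split; unfold Rmin; repeat destruct Rle_dec; lra.
  - intros a b c d Ia Ib Ic Id Hab Hcd.
    rewrite (Ueq b d Ib Id), (Ueq a c Ia Ic), (Ueq b c Ib Ic), (Ueq a d Ia Id).
    destruct (Fa a b Ia Ib Hab) as [F1 [F2 F3]].
    destruct (Fa c d Ic Id Hcd) as [G1 [G2 G3]].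
    apply key; assumption.
  - intros t It. rewrite (Ueq t t It It). assert (Ht := Hh t It).
    assert (E : h t = t - delta t) by reflexivity.
    unfold Rmin. repeat destruct Rle_dec; lra.
Qed.
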